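(* Let $(X,\sigma)$ be an infinite mixing one-sided or two-sided synchronizing subshift, let $(Y,g)$ be a dynamical system, and let $\pi\colon(X,\sigma)\to(Y,g)$ be a factor map such that $\pi^{-1}(y)$ is at most countable for each $y\in Y$. Then there exist $\varepsilon>0$, $k\in\mathbb N$ and a dense Mycielski set $T\subset Y$ with $g^k(T)\subset T$ which is syndetically $\varepsilon$-scrambled for $g$.
   Context: A dynamical system $(Y,g)$: compact metric space $Y$ with continuous $g$. A factor map is a continuous surjection with $\pi\circ\sigma=g\circ\pi$. Synchronizing word $s\in L(X)$: $us,sv\in L(X)\Rightarrow usv\in L(X)$; synchronizing subshift: transitive subshift with a synchronizing word. Mixing: $\{n:\sigma^n(U)\cap V\ne\emptyset\}$ cofinite for all nonempty open $U,V$. Syndetic: subset of $\mathbb N$ meeting every set with arbitrarily long runs of consecutive integers. $\mathrm{Asy}(g)=\{(x,y):d(g^nx,g^ny)\to0\}$, $\mathrm{SProx}(g)=\{(x,y):\{n:d(g^nx,g^ny)<\eta\}$ syndetic for all $\eta>0\}$. Syndetically $\varepsilon$-scrambled set: at least two points, every distinct pair in $\mathrm{SProx}(g)\setminus\mathrm{Asy}(g)$ with $\limsup_n d(g^nx,g^ny)\ge\varepsilon$. Mycielski set: countable union of Cantor sets. *)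

(* Defs.v *)
From Stdlib Require Import Reals ZArith List.
Open Scope R_scope.

Record IndexSys := {
  idx : Type;
  two_sided : bool;
  isucc : idx -> idx;
  iadd : idx -> nat -> idx;
  iwin : nat -> idx -> Prop        (* the central window of radius m *)
}.

Definition NatIdx : IndexSys :=
  {| idx := nat; two_sided := false; isucc := S;
     iadd := fun i j => (i + j)%nat; iwin := fun m i => (i < m)%nat |}.

Definition ZIdx : IndexSys :=
  {| idx := Z; two_sided := true; isucc := Z.succ;
     iadd := fun i j => (i + Z.of_nat j)%Z;
     iwin := fun m i => (- Z.of_nat m <= i <= Z.of_nat m)%Z |}.

Section Shift.
Variables (S : IndexSys) (A : Type).

Definition config := idx S -> A.

Definition sshift (x : config) : config := fun i => x (isucc S i).

(** x and y agree on the window of radius m (basic cylinder neighbourhoods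
    of the product topology) *)
Definition agree (m : nat) (x y : config) : Prop :=
  forall i, iwin S m i -> x i = y i.

Definition closed_set (X : config -> Prop) : Prop :=
  forall x, (forall m, exists y, X y /\ agree m x y) -> X x.

(** subshift: closed and sshift-invariant (sigma(X) c X one-sided,
    sigma(X) = X two-sided) *)
Definition subshift (X : config -> Prop) : Prop :=
  closed_set X /\ (forall x, X x -> X (sshift x)) /\
  (two_sided S = true -> forall x, X x -> exists y, X y /\ sshift y = x).

Definition rel_open (X U : config -> Prop) : Prop :=
  (forall x, U x -> X x) /\
  (forall x, U x -> exists m, forall y, X y -> agree m x y -> U y).

Definition transitive (X : config -> Prop) : Prop :=
  forall U V, rel_open X U -> rel_open X V -> (exists u, U u) -> (exists v, V v) ->
    exists n, exists x, U x /\ V (Nat.iter n sshift x).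

Definition mixing (X : config -> Prop) : Prop :=
  forall U V, rel_open X U -> rel_open X V -> (exists u, U u) -> (exists v, V v) ->
    exists N, forall n, (N <= n)%nat -> exists x, U x /\ V (Nat.iter n sshift x).

Definition occurs (w : list A) (x : config) : Prop :=
  exists i, forall j, (j < length w)%nat -> nth_error w j = Some (x (iadd S i j)).

Definition lang (X : config -> Prop) (w : list A) : Prop :=
  exists x, X x /\ occurs w x.

Definition synchronizing_word (X : config -> Prop) (s : list A) : Prop :=
  lang X s /\
  forall u v, lang X (u ++ s) -> lang X (s ++ v) -> lang X (u ++ s ++ v).

Definition synchronizing_subshift (X : config -> Prop) : Prop :=
  subshift X /\ transitive X /\ exists s, synchronizing_word X s.

Definition infinite_set (X : config -> Prop) : Prop :=
  ~ exists l : list config, forall x, X x -> In x l.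

End Shift.

Arguments sshift {S A}.
Arguments agree {S A}.

Section Metric.
Variables (Y : Type) (d : Y -> Y -> R).

Definition metric : Prop :=
  (forall x y, 0 <= d x y) /\ (forall x y, d x y = 0 <-> x = y) /\
  (forall x y, d x y = d y x) /\ (forall x y z, d x z <= d x y + d y z).

Definition compact_metric_space : Prop :=
  metric /\
  forall u : nat -> Y, exists (phi : nat -> nat) (l : Y),
    (forall n, (phi n < phi (S n))%nat) /\
    Un_cv (fun n => d (u (phi n)) l) 0.

Definition continuous_map (g : Y -> Y) : Prop :=
  forall x eps, 0 < eps -> exists delta, 0 < delta /\
    forall y, d x y < delta -> d (g x) (g y) < eps.

Definition dense (T : Y -> Prop) : Prop :=
  forall y eps, 0 < eps -> exists t, T t /\ d y t < eps.

(** Cantor set: homeomorphic image of the Cantor space {0,1}^N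
    (a continuous injection from a compact space into a metric space is a
    homeomorphism onto its image) *)
Definition cantor_set (C : Y -> Prop) : Prop :=
  exists f : (nat -> bool) -> Y,
    (forall p eps, 0 < eps -> exists m, forall q,
        (forall i, (i < m)%nat -> p i = q i) -> d (f p) (f q) < eps) /\
    (forall p q, f p = f q -> p = q) /\
    (forall y, C y <-> exists p, f p = y).

Definition mycielski (T : Y -> Prop) : Prop :=
  exists C : nat -> Y -> Prop,
    (forall n, cantor_set (C n)) /\ (forall y, T y <-> exists n, C n y).

Definition thick (Q : nat -> Prop) : Prop :=
  forall L, exists a, forall j, (j < L)%nat -> Q (a + j)%nat.

Definition syndetic (P : nat -> Prop) : Prop :=
  forall Q, thick Q -> exists n, Q n /\ P n.

Definition asymptotic (g : Y -> Y) (x y : Y) : Prop :=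
  Un_cv (fun n => d (Nat.iter n g x) (Nat.iter n g y)) 0.

Definition synd_proximal (g : Y -> Y) (x y : Y) : Prop :=
  forall eta, 0 < eta -> syndetic (fun n => d (Nat.iter n g x) (Nat.iter n g y) < eta).

Definition limsup_ge (g : Y -> Y) (eps : R) (x y : Y) : Prop :=
  forall delta, 0 < delta -> forall N, exists n, (N <= n)%nat /\
    eps - delta < d (Nat.iter n g x) (Nat.iter n g y).

Definition synd_scrambled (g : Y -> Y) (eps : R) (T : Y -> Prop) : Prop :=
  (exists x y, T x /\ T y /\ x <> y) /\
  forall x y, T x -> T y -> x <> y ->
    synd_proximal g x y /\ ~ asymptotic g x y /\ limsup_ge g eps x y.

End Metric.

Definition sys_of (b : bool) : IndexSys := if b then ZIdx else NatIdx.

(* Main.v *)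
Require Import Defs.
From Stdlib Require Import Reals ZArith List.
From Stdlib Require Import Arith Lia Lra Classical ClassicalEpsilon FunctionalExtensionality Cantor Bool.
Import ListNotations.
Open Scope nat_scope.


Module P4.

Definition ispow (u : nat) : bool := Nat.eqb u (2 ^ Nat.log2 u).

Definition cc (i : nat) (p : nat -> bool) (u : nat) : bool :=
  if ispow u then
    let n := Nat.log2 u in
    if Nat.eqb (fst (Cantor.of_nat n)) i then
      match fst (Cantor.of_nat (snd (Cantor.of_nat n))) with 0 => true | S k => p k end
    else false
  else false.

Lemma log2_pw n : Nat.log2 (2 ^ n) = n.
Proof. apply Nat.log2_pow2; lia. Qed.

Lemma ispow_pw n : ispow (2 ^ n) = true.
Proof. unfold ispow. rewrite log2_pw. apply Nat.eqb_refl. Qed.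

Lemma ispow_true u : ispow u = true -> u = 2 ^ Nat.log2 u.
Proof. unfold ispow. intros H; apply Nat.eqb_eq; auto. Qed.

Lemma pw_gt n : n < 2 ^ n.
Proof. apply Nat.pow_gt_lin_r; lia. Qed.

Lemma pw_lt_iff a b : 2 ^ a < 2 ^ b <-> a < b.
Proof. symmetry. apply Nat.pow_lt_mono_r_iff; lia. Qed.

Lemma between v n : 2 ^ n < v -> v < 2 ^ S n -> ispow v = false.
Proof.
  intros H1 H2. destruct (ispow v) eqn:E; auto. apply ispow_true in E.
  rewrite E in H1, H2. apply (proj1 (pw_lt_iff _ _)) in H1. apply (proj1 (pw_lt_iff _ _)) in H2. lia.
Qed.

Lemma cc_nopow i p u : ispow u = false -> cc i p u = false.
Proof. unfold cc; intros H; rewrite H; auto. Qed.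

Lemma cc_marker i p l : cc i p (2 ^ Cantor.to_nat (i, Cantor.to_nat (0, l))) = true.
Proof.
  unfold cc. rewrite ispow_pw, log2_pw, cancel_of_to. cbn [fst snd]. rewrite Nat.eqb_refl, cancel_of_to. auto.
Qed.

Lemma cc_val i p k l : cc i p (2 ^ Cantor.to_nat (i, Cantor.to_nat (S k, l))) = p k.
Proof.
  unfold cc. rewrite ispow_pw, log2_pw, cancel_of_to. cbn [fst snd]. rewrite Nat.eqb_refl, cancel_of_to. auto.
Qed.

Lemma cc_other i i' p y : i <> i' -> cc i' p (2 ^ Cantor.to_nat (i, y)) = false.
Proof.
  intros H. unfold cc. rewrite ispow_pw, log2_pw, cancel_of_to. cbn [fst snd].
  destruct (Nat.eqb_spec i i'); auto; lia.
Qed.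

Lemma of_nat_bd n : fst (Cantor.of_nat n) <= n /\ snd (Cantor.of_nat n) <= n.
Proof.
  pose proof (to_nat_non_decreasing (fst (Cantor.of_nat n)) (snd (Cantor.of_nat n))).
  rewrite <- surjective_pairing, cancel_to_of in H. lia.
Qed.

Lemma cc_local i p q u : (forall k, k < u -> p k = q k) -> cc i p u = cc i q u.
Proof.
  intros H. unfold cc. destruct (ispow u) eqn:E; auto.
  destruct (Nat.eqb _ i); auto.
  apply ispow_true in E.
  set (n := Nat.log2 u) in *.
  destruct (of_nat_bd n) as [_ H1]. destruct (of_nat_bd (snd (Cantor.of_nat n))) as [H2 _].
  pose proof (pw_gt n).
  destruct (fst (Cantor.of_nat (snd (Cantor.of_nat n)))) eqn:E2; auto. apply H. lia.
Qed.

Lemma big_pow_l i N : exists l, N < 2 ^ Cantor.to_nat (i, Cantor.to_nat (0, l)) /\ 2 <= Cantor.to_nat (i, Cantor.to_nat (0, l)) /\ N < Cantor.to_nat (i, Cantor.to_nat (0, l)).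
Proof.
  exists (N + 2). pose proof (to_nat_non_decreasing 0 (N + 2)).
  pose proof (to_nat_non_decreasing i (Cantor.to_nat (0, N + 2))).
  pose proof (pw_gt (Cantor.to_nat (i, Cantor.to_nat (0, N + 2)))). lia.
Qed.

Lemma MM i p e1 i' p' e2 : (e1 <> e2 \/ i <> i' \/ exists k, p k <> p' k) ->
  forall N, exists K, N <= K /\ cc i p (K + e1) <> cc i' p' (K + e2).
Proof.
  intros Hd N.
  destruct (Nat.eq_dec e1 e2) as [Ee|Ne].
  - destruct (Nat.eq_dec i i') as [Ei|Ni].
    + destruct Hd as [H|[H|[k Hk]]]; try lia. subst.
      set (n := Cantor.to_nat (i', Cantor.to_nat (S k, N + e2))).
      assert (N + e2 < 2 ^ n).
      { pose proof (to_nat_non_decreasing (S k) (N + e2)). pose proof (to_nat_non_decreasing i' (Cantor.to_nat (S k, N + e2))).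
        pose proof (pw_gt n). unfold n in *; lia. }
      exists (2 ^ n - e2). split; [lia|]. replace (2 ^ n - e2 + e2) with (2 ^ n) by lia.
      unfold n. rewrite !cc_val. auto.
    + subst e1. destruct (big_pow_l i (N + e2)) as [l [H1 _]].
      exists (2 ^ Cantor.to_nat (i, Cantor.to_nat (0, l)) - e2). split; [lia|].
      replace (2 ^ Cantor.to_nat (i, Cantor.to_nat (0, l)) - e2 + e2) with (2 ^ Cantor.to_nat (i, Cantor.to_nat (0, l))) by lia.
      rewrite cc_marker, cc_other by auto. discriminate.
  - destruct (big_pow_l i (N + 2 * (e1 + e2) + 2)) as [l [H1 [H2 H3]]].
    pose proof (cc_marker i p l) as Hmk.
    set (n := Cantor.to_nat (i, Cantor.to_nat (0, l))) in *.
    exists (2 ^ n - e1). split; [lia|].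
    replace (2 ^ n - e1 + e1) with (2 ^ n) by lia. rewrite Hmk.
    rewrite cc_nopow; [discriminate|].
    destruct (Nat.lt_ge_cases e1 e2).
    + apply between with n; simpl; lia.
    + destruct n as [|n']; [lia|]. apply between with n'.
      * simpl in H1 |- *. pose proof (pw_gt n'). lia.
      * simpl in *. lia.
Qed.

Lemma SY (E R : nat) : exists K0 G, forall K, K0 <= K -> exists K', K <= K' < K + G /\ R <= K' /\
  forall t, K' - R <= t <= K' + R -> forall i p e, e <= E -> cc i p (t + e) = false.
Proof.
  set (R' := R + E). exists (4 * R' + 2 + R), (4 * R' + 2). intros K HK.
  assert (Hc : forall c, R' <= c -> (forall v, c - R' <= v <= c + R' -> ispow v = false) ->
     forall t, c - R <= t <= c + R -> forall i p e, e <= E -> cc i p (t + e) = false).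
  { intros c Hc Hv t Ht i p e He. apply cc_nopow. apply Hv. unfold R' in *. lia. }
  destruct (classic (exists v, K <= v <= K + 2 * R' /\ ispow v = true)) as [[v [Hv1 Hv2]]|Hn].
  - exists (K + 3 * R' + 1). split; [lia|]. split; [unfold R' in *; lia|].
    apply Hc; [lia|]. intros w Hw. destruct (ispow w) eqn:Ew; auto. exfalso.
    apply ispow_true in Hv2. apply ispow_true in Ew.
    assert (Hlt : 2 ^ Nat.log2 v < 2 ^ Nat.log2 w) by lia.
    apply (proj1 (pw_lt_iff _ _)) in Hlt.
    assert (2 ^ S (Nat.log2 v) <= 2 ^ Nat.log2 w) by (apply Nat.pow_le_mono_r; lia).
    simpl in H. lia.
  - exists (K + R'). split; [lia|]. split; [unfold R' in *; lia|].
    apply Hc; [lia|]. intros w Hw. destruct (ispow w) eqn:Ew; auto. exfalso. apply Hn.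
    exists w; split; auto. lia.
Qed.

End P4.
Import P4.

Open Scope R_scope.

Module P1.

Record GoodIdx (S : IndexSys) := {
  toZ : idx S -> Z;
  ofZ : Z -> idx S;
  toZ_succ : forall t, toZ (isucc S t) = (toZ t + 1)%Z;
  toZ_add : forall t j, toZ (iadd S t j) = (toZ t + Z.of_nat j)%Z;
  ofZ_toZ : forall t, ofZ (toZ t) = t;
  toZ_ofZ : forall z, (two_sided S = true \/ (0 <= z)%Z) -> toZ (ofZ z) = z;
  toZ_nn : forall t, two_sided S = false -> (0 <= toZ t)%Z;
  wst : nat -> Z;
  wst_le : forall m, (- Z.of_nat m <= wst m <= 0)%Z;
  wst_rng : forall m, two_sided S = true \/ (0 <= wst m)%Z;
  win_bd : forall m t, iwin S m t -> (wst m <= toZ t <= Z.of_nat m)%Z;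
  win_in : forall m k, (k < m)%nat -> iwin S m (ofZ (Z.of_nat k));
  win_mono : forall m m' t, (m <= m')%nat -> iwin S m t -> iwin S m' t
}.

Definition GI_nat : GoodIdx NatIdx.
Proof.
  refine {| toZ := fun t : idx NatIdx => Z.of_nat t; ofZ := Z.to_nat; wst := fun _ => 0%Z |};
  simpl; intros; try lia; try (right; lia).
  all: try (destruct H; [discriminate|lia]).
Defined.

Definition GI_Z : GoodIdx ZIdx.
Proof.
  refine {| toZ := fun t : idx ZIdx => t; ofZ := fun z : Z => (z : idx ZIdx); wst := fun m => (- Z.of_nat m)%Z |};
  simpl; intros; try lia; auto.
Defined.

Definition GI_sys (b : bool) : GoodIdx (sys_of b) :=
  match b with true => GI_Z | false => GI_nat end.

Section Gen.
Variables (S : IndexSys) (GI : GoodIdx S) (A : Type).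
Notation tZ := (toZ S GI).
Notation oZ := (ofZ S GI).
Definition inR (z : Z) : Prop := two_sided S = true \/ (0 <= z)%Z.

Lemma inR_tZ t : inR (tZ t).
Proof. unfold inR. destruct (two_sided S) eqn:E; auto. right; apply toZ_nn; auto. Qed.
Lemma inR_add z k : inR z -> (0 <= k)%Z -> inR (z + k).
Proof. unfold inR; intros [H|H] Hk; auto. right; lia. Qed.
Lemma inR_nn z : (0 <= z)%Z -> inR z.
Proof. right; auto. Qed.
Lemma tZ_oZ z : inR z -> tZ (oZ z) = z.
Proof. intro H; apply toZ_ofZ; auto. Qed.

Definition word (F : Z -> A) (a : Z) (n : nat) : list A :=
  map (fun k => F (a + Z.of_nat k)%Z) (seq 0 n).
Definition cfg (F : Z -> A) : config S A := fun t => F (tZ t).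
Definition xw (x : config S A) (a : Z) (n : nat) : list A := word (fun z => x (oZ z)) a n.

Lemma word_length F a n : length (word F a n) = n.
Proof. unfold word; rewrite length_map, length_seq; auto. Qed.

Lemma word_nth F a n k : (k < n)%nat -> nth_error (word F a n) k = Some (F (a + Z.of_nat k)%Z).
Proof.
  intro H; unfold word. rewrite nth_error_map, nth_error_seq.
  destruct (Nat.ltb_spec k n); [|lia]. simpl. reflexivity.
Qed.

Lemma seq_plus n s0 m : seq (n + s0) m = map (Nat.add n) (seq s0 m).
Proof. revert s0; induction m; intros; simpl; auto. f_equal. rewrite <- IHm. f_equal. lia. Qed.

Lemma word_app F a n m : word F a (n + m) = word F a n ++ word F (a + Z.of_nat n) m.
Proof.
  unfold word. rewrite seq_app, map_app. f_equal.
  replace (seq (0 + n) m) with (seq (n + 0) m) by (f_equal; lia).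
  rewrite seq_plus, map_map. apply map_ext; intros k. f_equal. lia.
Qed.

Lemma word_ext F G a b n : (forall k, (k < n)%nat -> F (a + Z.of_nat k)%Z = G (b + Z.of_nat k)%Z) ->
  word F a n = word G b n.
Proof.
  intros H; apply nth_error_ext; intros k.
  destruct (Nat.ltb_spec k n).
  - rewrite !word_nth by auto. rewrite H; auto.
  - rewrite !(proj2 (nth_error_None _ _)); auto; rewrite word_length; lia.
Qed.

Lemma word_eq_list F a w : (forall k, (k < length w)%nat -> nth_error w k = Some (F (a + Z.of_nat k)%Z)) ->
  word F a (length w) = w.
Proof.
  intros H; apply nth_error_ext; intros k.
  destruct (Nat.ltb_spec k (length w)).
  - rewrite word_nth by auto. rewrite H; auto.
  - rewrite !(proj2 (nth_error_None _ _)); auto; rewrite ?word_length; lia.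
Qed.

Lemma iter_shift n (x : config S A) t :
  Nat.iter n sshift x t = x (oZ (tZ t + Z.of_nat n)%Z).
Proof.
  revert t; induction n; intros t; simpl.
  - rewrite Z.add_0_r, ofZ_toZ; auto.
  - unfold sshift at 1. rewrite IHn, toZ_succ. f_equal. f_equal. lia.
Qed.

Lemma iter_cfg n F : Nat.iter n sshift (cfg F) = cfg (fun z => F (z + Z.of_nat n)%Z).
Proof.
  apply functional_extensionality; intros t. rewrite iter_shift. unfold cfg.
  rewrite tZ_oZ; auto. apply inR_add; [apply inR_tZ|lia].
Qed.

Lemma xw_cfg F a n : inR a -> xw (cfg F) a n = word F a n.
Proof.
  intros Ha. unfold xw, cfg. apply word_ext. intros k Hk. rewrite tZ_oZ; auto.
  apply inR_add; auto; lia.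
Qed.

Lemma iadd_oZ i j : iadd S i j = oZ (tZ i + Z.of_nat j)%Z.
Proof. rewrite <- toZ_add, ofZ_toZ; auto. Qed.
End Gen.
Arguments inR {S}.
Arguments inR_tZ {S} GI.
Arguments inR_add {S}.
Arguments inR_nn {S}.
Arguments tZ_oZ {S} GI.
Arguments word {A}.
Arguments cfg {S} GI {A}.
Arguments xw {S} GI {A}.
Arguments word_length {A}.
Arguments word_nth {A}.
Arguments word_app {A}.
Arguments word_ext {A}.
Arguments word_eq_list {A}.
Arguments iter_shift {S} GI {A}.
Arguments iter_cfg {S} GI {A}.
Arguments xw_cfg {S} GI {A}.
Arguments iadd_oZ {S} GI.

End P1.
Import P1.

Module P2.

Section Lang.
Variables (S : IndexSys) (GI : GoodIdx S) (A : Type).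
Notation tZ := (toZ S GI).
Notation oZ := (ofZ S GI).
Notation xw := (xw GI).
Notation cfg := (cfg GI).
Variables (X : config S A -> Prop) (HXsub : subshift S A X).
Notation lang := (lang S A X).

Lemma X_iter n x : X x -> X (Nat.iter n sshift x).
Proof. destruct HXsub as [_ [H _]]. induction n; simpl; auto. Qed.

Lemma X_back n x : two_sided S = true -> X x -> exists y, X y /\ Nat.iter n sshift y = x.
Proof.
  destruct HXsub as [_ [_ H]]. intros T. induction n; intros Hx.
  - exists x; auto.
  - destruct IHn as [y [Hy E]]; auto. destruct (H T y Hy) as [y' [Hy' E']].
    exists y'; split; auto. simpl. rewrite <- E. rewrite <- E'.
    clear. induction n; simpl; auto. rewrite IHn; auto.
Qed.

Lemma shift_exists x k : X x -> @inR S k -> exists y, X y /\ forall t, y t = x (oZ (tZ t + k)%Z).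
Proof.
  intros Hx [T|Hk].
  - destruct (Z_le_gt_dec 0 k).
    + exists (Nat.iter (Z.to_nat k) sshift x); split; [apply X_iter; auto|].
      intros t; rewrite (iter_shift GI). rewrite Z2Nat.id; auto.
    + destruct (X_back (Z.to_nat (-k)) x T Hx) as [y [Hy E]].
      exists y; split; auto. intros t. rewrite <- E. rewrite (iter_shift GI).
      rewrite (tZ_oZ GI) by (left; auto). rewrite Z2Nat.id by lia.
      replace (tZ t + k + - k)%Z with (tZ t) by lia. rewrite ofZ_toZ; auto.
  - exists (Nat.iter (Z.to_nat k) sshift x); split; [apply X_iter; auto|].
    intros t; rewrite (iter_shift GI). rewrite Z2Nat.id; auto.
Qed.

Lemma lang_xw x a n : X x -> @inR S a -> lang (xw x a n).
Proof.
  intros Hx Ha. exists x; split; auto. exists (oZ a). intros j Hj.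
  unfold P1.xw in *. rewrite word_length in Hj. rewrite word_nth by auto.
  rewrite (iadd_oZ GI), (tZ_oZ GI); auto.
Qed.

Lemma realize u : lang u -> exists y, X y /\ xw y 0 (length u) = u.
Proof.
  intros [x [Hx [i Hi]]].
  destruct (shift_exists x (tZ i) Hx (inR_tZ GI i)) as [y [Hy E]].
  exists y; split; auto. unfold P1.xw. apply word_eq_list. intros k Hk.
  rewrite Hi by auto. rewrite E, (iadd_oZ GI). rewrite (tZ_oZ GI) by (apply inR_nn; lia).
  f_equal. f_equal. f_equal. lia.
Qed.

Lemma occurs_app_l u v x : occurs S A (u ++ v) x -> occurs S A u x.
Proof.
  intros [i Hi]. exists i. intros j Hj. rewrite <- Hi by (rewrite length_app; lia).
  rewrite nth_error_app1; auto.
Qed.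

Lemma occurs_app_r u v x : occurs S A (u ++ v) x -> occurs S A v x.
Proof.
  intros [i Hi]. exists (iadd S i (length u)). intros j Hj.
  specialize (Hi (length u + j)%nat). rewrite nth_error_app2 in Hi by lia.
  replace (length u + j - length u)%nat with j in Hi by lia. rewrite Hi by (rewrite length_app; lia).
  f_equal. f_equal. rewrite !(iadd_oZ GI). rewrite (tZ_oZ GI) by (apply inR_add; [apply inR_tZ|lia]).
  f_equal. lia.
Qed.

Lemma lang_app_l u v : lang (u ++ v) -> lang u.
Proof. intros [x [Hx H]]; exists x; split; auto; eapply occurs_app_l; eauto. Qed.
Lemma lang_app_r u v : lang (u ++ v) -> lang v.
Proof. intros [x [Hx H]]; exists x; split; auto; eapply occurs_app_r; eauto. Qed.

Variables (s : list A) (Hs : synchronizing_word S A X s).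

Lemma glue_list (ws : list (list A)) :
  (forall w, In w ws -> exists r, w = s ++ r /\ lang (w ++ s)) -> lang (concat ws ++ s).
Proof.
  induction ws as [|w ws IH]; intros H.
  - simpl. apply Hs.
  - simpl. destruct (H w (or_introl eq_refl)) as [r [E Hw]].
    assert (IH' : lang (concat ws ++ s)) by (apply IH; intros; apply H; right; auto).
    assert (exists v, concat ws ++ s = s ++ v) as [v Ev].
    { destruct ws as [|w' ws'].
      - exists []; simpl; rewrite app_nil_r; auto.
      - destruct (H w' (or_intror (or_introl eq_refl))) as [r' [E' _]].
        exists (r' ++ concat ws' ++ s). simpl. rewrite E'. rewrite !app_assoc; auto. }
    rewrite Ev in IH'. subst w.
    destruct Hs as [_ Hg]. specialize (Hg (s ++ r) v Hw IH').
    rewrite <- app_assoc. rewrite Ev. rewrite app_assoc in Hg. rewrite <- !app_assoc in *. auto.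
Qed.

Definition cyl (u : list A) : config S A -> Prop := fun y => X y /\ xw y 0 (length u) = u.

Lemma cyl_open u : rel_open S A X (cyl u).
Proof.
  split. - intros x [H _]; auto.
  - intros x [Hx E]. exists (length u). intros y Hy Ha. split; auto.
    transitivity (xw x 0 (length u)); [|exact E]. unfold P1.xw. apply word_ext. intros k Hk. simpl.
    symmetry. apply Ha. apply win_in; auto.
Qed.

Variable HXmix : mixing S A X.

Lemma MIX u v : lang u -> lang v -> exists N, forall n, (N <= n)%nat ->
  exists mid, length mid = n /\ lang (u ++ mid ++ v).
Proof.
  intros Hu Hv.
  destruct (HXmix (cyl u) (cyl v) (cyl_open u) (cyl_open v)) as [N HN].
  { destruct (realize u Hu) as [y [Hy E]]; exists y; split; auto. }
  { destruct (realize v Hv) as [y [Hy E]]; exists y; split; auto. }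
  exists N. intros n Hn. destruct (HN (length u + n)%nat) as [x [[Hx Ex] [_ Ev]]]; [lia|].
  exists (xw x (Z.of_nat (length u)) n). split; [apply word_length|].
  assert (Hw := lang_xw x 0 (length u + n + length v) Hx (inR_nn 0 (Z.le_refl 0))).
  unfold P1.xw in Hw. rewrite !word_app in Hw. fold (P1.xw GI x 0 (length u)) in Hw. rewrite Ex in Hw.
  rewrite <- app_assoc in Hw. replace (0 + Z.of_nat (length u))%Z with (Z.of_nat (length u)) in Hw by lia.
  fold (P1.xw GI x (Z.of_nat (length u)) n) in Hw.
  assert (Ev' : word (fun z => x (oZ z)) (0 + Z.of_nat (length u + n)) (length v) = v).
  { rewrite <- Ev at 2. unfold P1.xw. apply word_ext. intros k Hk. rewrite (iter_shift GI).
    rewrite (tZ_oZ GI) by (apply inR_nn; lia). f_equal. f_equal. lia. }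
  rewrite Ev' in Hw; exact Hw.
Qed.

Lemma MIX2 u v u' v' : lang u -> lang v -> lang u' -> lang v' -> exists N, forall n, (N <= n)%nat ->
  exists mid mid', length mid = n /\ length mid' = n /\ lang (u ++ mid ++ v) /\ lang (u' ++ mid' ++ v').
Proof.
  intros H1 H2 H3 H4. destruct (MIX u v H1 H2) as [N1 HN1]. destruct (MIX u' v' H3 H4) as [N2 HN2].
  exists (N1 + N2)%nat. intros n Hn. destruct (HN1 n) as [m1 [L1 G1]]; [lia|].
  destruct (HN2 n) as [m2 [L2 G2]]; [lia|]. exists m1, m2; auto.
Qed.

End Lang.

End P2.
Import P2.

Module P3.

Section Blocks.
Variables (S : IndexSys) (GI : GoodIdx S) (A : Type).
Notation tZ := (toZ S GI).
Notation oZ := (ofZ S GI).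
Notation xw := (xw GI).
Notation cfg := (cfg GI).
Variables (X : config S A -> Prop) (HXsub : subshift S A X).
Notation lang := (lang S A X).
Variables (s : list A) (Hs : synchronizing_word S A X s).

Lemma MEMword F : (forall m, exists a0 len, (a0 <= wst S GI m)%Z /\ (Z.of_nat m < a0 + Z.of_nat len)%Z /\
   lang (word F a0 len)) -> X (cfg F).
Proof.
  intros H. destruct HXsub as [Hcl _]. apply Hcl. intros m.
  destruct (H m) as [a0 [len [H1 [H2 H3]]]].
  destruct (realize S GI A X HXsub _ H3) as [y0 [Hy0 E]].
  rewrite word_length in E.
  assert (Hm := wst_le S GI m).
  destruct (shift_exists S GI A X HXsub y0 (- a0) Hy0) as [y [Hy Ey]]; [apply inR_nn; lia|].
  exists y; split; auto. intros t Ht. apply (win_bd S GI) in Ht.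
  unfold P1.cfg. rewrite Ey.
  set (k := Z.to_nat (tZ t - a0)).
  assert (Hk : (k < len)%nat) by (unfold k; lia).
  assert (E1 := word_nth (fun z => y0 (oZ z)) 0 len k Hk).
  unfold P1.xw in E. rewrite E in E1. rewrite word_nth in E1 by auto.
  inversion E1. unfold k in H4. rewrite Z2Nat.id in H4 by lia.
  replace (a0 + (tZ t - a0))%Z with (tZ t) in H4 by lia. rewrite H4. reflexivity.
Qed.

Variables (d : A) (L : nat) (HL : (0 < L)%nat).
Definition LZ : Z := Z.of_nat L.

Definition blk (W : list A) (k : nat) : list A := firstn L (skipn (k * L) W).

Definition beta (bl W : list A) (a : nat) (tau : nat -> list A) (k : Z) : list A :=
  if (k <? 0)%Z then bl else if (Z.to_nat k <? a)%nat then blk W (Z.to_nat k) else tau (Z.to_nat k - a)%nat.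

Definition BF (bt : Z -> list A) : Z -> A :=
  fun n => nth (Z.to_nat (n mod LZ)) (bt (n / LZ)%Z) d.

Lemma BF_blk bt k r : (r < L)%nat -> BF bt (k * LZ + Z.of_nat r)%Z = nth r (bt k) d.
Proof.
  intros Hr. unfold BF.
  assert (E1 : ((k * LZ + Z.of_nat r) / LZ = k)%Z).
  { unfold LZ. rewrite Z.div_add_l by lia. rewrite Z.div_small by lia. lia. }
  assert (E2 : ((k * LZ + Z.of_nat r) mod LZ = Z.of_nat r)%Z).
  { unfold LZ. rewrite Z.add_comm, Z_mod_plus_full. rewrite Z.mod_small by lia. auto. }
  rewrite E1, E2, Nat2Z.id; auto.
Qed.

Lemma BF_pos bt n : BF bt n = nth (Z.to_nat (n mod LZ)) (bt (n / LZ)%Z) d.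
Proof. reflexivity. Qed.

Lemma word_blk bt k : length (bt k) = L -> word (BF bt) (k * LZ) L = bt k.
Proof.
  intros HLk. transitivity (word (BF bt) (k * LZ) (length (bt k))); [rewrite HLk; auto|]. apply word_eq_list. intros j Hj.
  rewrite BF_blk by lia. apply nth_error_nth'. auto.
Qed.

Lemma word_blocks bt k n : (forall k, length (bt k) = L) ->
  word (BF bt) (k * LZ) (n * L) = concat (map (fun r => bt (k + Z.of_nat r)%Z) (seq 0 n)).
Proof.
  intros HB. revert k; induction n; intros k; simpl; auto.
  replace (L + n * L)%nat with (L + n * L)%nat by lia.
  rewrite word_app. rewrite word_blk by auto. f_equal.
  - f_equal; lia.
  - replace (k * LZ + Z.of_nat L)%Z with ((k + 1) * LZ)%Z by (unfold LZ; lia).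
    rewrite IHn. rewrite <- seq_shift, map_map. f_equal. apply map_ext. intros r. f_equal. lia.
Qed.

Lemma concat_blk W a : length W = (a * L)%nat -> concat (map (blk W) (seq 0 a)) = W.
Proof.
  revert W; induction a; intros W HW; simpl.
  - destruct W; simpl in *; auto; lia.
  - unfold blk at 1. simpl. rewrite <- seq_shift, map_map.
    transitivity (firstn L W ++ skipn L W); [|apply firstn_skipn]. f_equal.
    rewrite <- (IHa (skipn L W)) by (rewrite length_skipn; lia).
    f_equal. apply map_ext. intros r. unfold blk. rewrite skipn_skipn. f_equal. f_equal. lia.
Qed.

Lemma blk_len W a k : length W = (a * L)%nat -> (k < a)%nat -> length (blk W k) = L.
Proof. intros HW Hk. unfold blk. rewrite length_firstn, length_skipn. nia. Qed.

Definition sgood (w : list A) : Prop := (exists r, w = s ++ r) /\ lang (w ++ s).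

Lemma BF_mem bl W a tau : sgood bl -> length bl = L -> sgood W -> length W = (a * L)%nat ->
  (forall k, sgood (tau k) /\ length (tau k) = L) -> X (cfg (BF (beta bl W a tau))).
Proof.
  intros [Hb1 Hb2] Hbl [HW1 HW2] HWL Ht.
  assert (HB : forall k, length (beta bl W a tau k) = L).
  { intros k; unfold beta. destruct (k <? 0)%Z; auto. destruct (Nat.ltb_spec (Z.to_nat k) a).
    - apply blk_len with a; auto. - apply Ht. }
  apply MEMword. intros m. exists (- Z.of_nat (m + 1) * LZ)%Z, ((m + 1 + a + (m + 1)) * L)%nat.
  assert (Hm := wst_le S GI m).
  split; [unfold LZ; nia|]. split; [unfold LZ; nia|].
  rewrite (Nat.mul_add_distr_r (m+1+a) (m+1) L), (Nat.mul_add_distr_r (m+1) a L). rewrite !word_app.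
  rewrite <- !app_assoc.
  rewrite word_blocks by auto.
  replace (- Z.of_nat (m + 1) * LZ + Z.of_nat ((m + 1) * L))%Z with (0 * LZ)%Z by (unfold LZ; lia).
  rewrite word_blocks by auto.
  replace (- Z.of_nat (m + 1) * LZ + Z.of_nat ((m + 1) * L + a * L))%Z with (Z.of_nat a * LZ)%Z by (unfold LZ; lia).
  rewrite word_blocks by auto.
  replace (map (fun r => beta bl W a tau (- Z.of_nat (m + 1) + Z.of_nat r)%Z) (seq 0 (m + 1)))
    with (repeat bl (m + 1)).
  2:{ clear -HL. generalize (m + 1)%nat as q. intros q.
      transitivity (map (fun _ => bl) (seq 0 q)); [rewrite map_const, length_seq; auto|].
      apply map_ext_in. intros r Hr. apply in_seq in Hr. unfold beta.
      destruct (Z.ltb_spec (- Z.of_nat q + Z.of_nat r) 0); auto; lia. }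
  replace (map (fun r => beta bl W a tau (0 + Z.of_nat r)%Z) (seq 0 a)) with (map (blk W) (seq 0 a)).
  2:{ apply map_ext_in. intros r Hr. apply in_seq in Hr. unfold beta.
      destruct (Z.ltb_spec (0 + Z.of_nat r) 0); [lia|]. rewrite Z.add_0_l, Nat2Z.id.
      destruct (Nat.ltb_spec r a); auto; lia. }
  rewrite concat_blk by auto.
  replace (map (fun r => beta bl W a tau (Z.of_nat a + Z.of_nat r)%Z) (seq 0 (m + 1))) with
    (map tau (seq 0 (m + 1))).
  2:{ apply map_ext_in. intros r Hr. unfold beta.
      destruct (Z.ltb_spec (Z.of_nat a + Z.of_nat r) 0); [lia|].
      rewrite <- Nat2Z.inj_add, Nat2Z.id. destruct (Nat.ltb_spec (a + r) a); [lia|]. f_equal; lia. }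
  apply (lang_app_l S A X _ s).
  replace ((concat (repeat bl (m + 1)) ++ W ++ concat (map tau (seq 0 (m + 1)))) ++ s) with
    (concat (repeat bl (m + 1) ++ [W] ++ map tau (seq 0 (m + 1))) ++ s).
  2:{ rewrite !concat_app. simpl. rewrite app_nil_r, <- !app_assoc. auto. }
  apply (glue_list S A X s Hs). intros w Hw. apply in_app_iff in Hw as [Hw|Hw].
  - apply repeat_spec in Hw. subst w. destruct Hb1 as [r Hr]; exists r; auto.
  - destruct Hw as [Hw|Hw]; [subst w; destruct HW1 as [r Hr]; exists r; auto|].
    apply in_map_iff in Hw as [r [<- _]]. destruct (Ht r) as [[[r' Hr'] Hl] _]. exists r'; auto.
Qed.

Lemma BF_prefix bl W a tau q : length W = (a * L)%nat -> (0 <= q < Z.of_nat (length W))%Z ->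
  BF (beta bl W a tau) q = nth (Z.to_nat q) W d.
Proof.
  intros HW Hq.
  assert (HLZ : (0 < LZ)%Z) by (unfold LZ; lia).
  pose proof (Z.div_mod q LZ ltac:(lia)) as Hdm.
  pose proof (Z.mod_pos_bound q LZ HLZ) as Hm.
  set (B := (q / LZ)%Z) in *. set (r := (q mod LZ)%Z) in *.
  assert (HB0 : (0 <= B)%Z) by (unfold B; apply Z.div_pos; lia).
  assert (HBa : (B < Z.of_nat a)%Z) by (rewrite HW in Hq; unfold LZ in *; nia).
  replace q with (B * LZ + Z.of_nat (Z.to_nat r))%Z by (rewrite Z2Nat.id; lia).
  rewrite BF_blk by (unfold LZ in *; lia).
  unfold beta. destruct (Z.ltb_spec B 0); [lia|].
  destruct (Nat.ltb_spec (Z.to_nat B) a); [|lia].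
  unfold blk. rewrite nth_firstn. destruct (Nat.ltb_spec (Z.to_nat r) L); [|unfold LZ in *; lia].
  rewrite nth_skipn. f_equal. unfold LZ in *. lia.
Qed.

Lemma beta_const bl B : length bl = L -> beta bl bl 1 (fun _ => bl) B = bl.
Proof.
  intros Hl. unfold beta. destruct (B <? 0)%Z; auto.
  destruct (Nat.ltb_spec (Z.to_nat B) 1); auto.
  replace (Z.to_nat B) with 0%nat by lia. unfold blk. simpl. rewrite firstn_all2; auto. lia.
Qed.

End Blocks.

End P3.
Import P3.

Module P5.

Section Main.
Variables (S : IndexSys) (GI : GoodIdx S) (A : Type).
Notation tZ := (toZ S GI).
Notation oZ := (ofZ S GI).
Notation xw := (xw GI).
Notation cfg := (cfg GI).
Notation inR := (@inR S).
Variables (X : config S A -> Prop) (HXinf : infinite_set S A X) (HXmix : mixing S A X)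
  (HXsub : subshift S A X) (s : list A) (Hs : synchronizing_word S A X s).
Notation lang := (lang S A X).
Variables (Y : Type) (dY : Y -> Y -> R) (HYm : metric Y dY) (g : Y -> Y)
  (pi : config S A -> Y)
  (Hpi_cont : forall x eps, X x -> 0 < eps -> exists m, forall y, X y ->
                 agree m x y -> dY (pi x) (pi y) < eps)
  (Hpi_surj : forall y, exists x, X x /\ pi x = y)
  (Hpi_eqv : forall x, X x -> pi (sshift x) = g (pi x))
  (Hpi_fib : forall y, exists f : nat -> config S A,
                forall x, X x -> pi x = y -> exists n, f n = x).

Lemma X_ne : exists x0, X x0.
Proof.
  apply NNPP. intros H. apply HXinf. exists []. intros x Hx. apply H. eauto.
Qed.

Lemma lang_s : lang s.
Proof. apply Hs. Qed.

Lemma two_words : exists u u', lang u /\ lang u' /\ length u = length u' /\ u <> u'.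
Proof.
  apply NNPP. intros H. destruct X_ne as [x0 Hx0]. apply HXinf. exists [x0].
  intros x Hx. left. apply functional_extensionality. intros t.
  set (a := Z.min 0 (tZ t)).
  assert (Ha : inR a).
  { unfold a. destruct (Z.min_spec 0 (tZ t)) as [[_ E]|[_ E]]; rewrite E; [apply inR_nn; lia|apply inR_tZ]. }
  set (n := (Z.to_nat (tZ t - a) + 1)%nat).
  assert (E : xw x0 a n = xw x a n).
  { apply NNPP. intros Hne. apply H. exists (xw x0 a n), (xw x a n).
    split; [apply (lang_xw S GI A X); auto|]. split; [apply (lang_xw S GI A X); auto|].
    unfold P1.xw. rewrite !word_length. auto. }
  assert (Hk : (Z.to_nat (tZ t - a) < n)%nat) by (unfold n; lia).
  pose proof (word_nth (fun z => x0 (oZ z)) a n _ Hk) as E1.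
  pose proof (word_nth (fun z => x (oZ z)) a n _ Hk) as E2.
  unfold P1.xw in E. rewrite E in E1. rewrite E1 in E2. inversion E2.
  replace (a + Z.of_nat (Z.to_nat (tZ t - a)))%Z with (tZ t) in H1 by (unfold a; lia).
  rewrite ofZ_toZ in H1. auto.
Qed.

Lemma RET2 u u' : lang u -> lang u' -> exists p q p' q', length p = length p' /\ length q = length q' /\
  lang (s ++ p ++ u ++ q ++ s) /\ lang (s ++ p' ++ u' ++ q' ++ s).
Proof.
  intros Hu Hu'. destruct (MIX2 S GI A X HXsub HXmix u s u' s Hu lang_s Hu' lang_s) as [N2 HN2].
  destruct (HN2 N2 (le_n _)) as [q [q' [Lq [Lq' [G1 G2]]]]].
  destruct (MIX2 S GI A X HXsub HXmix s (u ++ q ++ s) s (u' ++ q' ++ s) lang_s G1 lang_s G2) as [N1 HN1].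
  destruct (HN1 N1 (le_n _)) as [p [p' [Lp [Lp' [F1 F2]]]]].
  exists p, q, p', q'. repeat split; auto; lia.
Qed.

Lemma pi_iter n x : X x -> pi (Nat.iter n sshift x) = Nat.iter n g (pi x).
Proof.
  induction n; intros Hx; simpl; auto. rewrite Hpi_eqv by (apply (X_iter S A X HXsub); auto). rewrite IHn; auto.
Qed.

Lemma sgood_blk p u q : lang (s ++ p ++ u ++ q ++ s) -> sgood S A X s (s ++ p ++ u ++ q).
Proof.
  intros H. split; [eauto|]. rewrite <- !app_assoc. auto.
Qed.

Lemma app_len_inv {B : Type} (l1 l2 l1' l2' : list B) : l1 ++ l2 = l1' ++ l2' -> length l1 = length l1' -> l1 = l1' /\ l2 = l2'.
Proof.
  revert l1'; induction l1; intros [|b l1'] E HL; simpl in *; try lia; auto.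
  inversion E. destruct (IHl1 l1' H1 ltac:(lia)). subst; auto.
Qed.

Lemma read_blk (dl : A) L bl W a tau (HL : (0 < L)%nat) k :
  (forall k, length (tau k) = L) -> (a <= k)%nat ->
  xw (cfg (BF A dl L (beta A L bl W a tau))) (Z.of_nat (k * L)) L = tau (k - a)%nat.
Proof.
  intros Ht Hk. rewrite xw_cfg by (apply inR_nn; lia).
  replace (Z.of_nat (k * L)) with (Z.of_nat k * LZ L)%Z by (unfold LZ; lia).
  rewrite (word_blk A dl L HL) by (unfold beta; destruct (Z.ltb_spec (Z.of_nat k) 0); [lia|];
    rewrite Nat2Z.id; destruct (Nat.ltb_spec k a); [lia|]; auto).
  unfold beta. destruct (Z.ltb_spec (Z.of_nat k) 0); [lia|].
  rewrite Nat2Z.id; destruct (Nat.ltb_spec k a); [lia|]; auto.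
Qed.

Lemma pi_nonconst : exists x1 x2, X x1 /\ X x2 /\ pi x1 <> pi x2.
Proof.
  destruct two_words as [u [u' [Hu [Hu' [Hl Hne]]]]].
  destruct (RET2 u u' Hu Hu') as [p [q [p' [q' [Lp [Lq [G1 G2]]]]]]].
  destruct u as [|dl u0]; [destruct u'; simpl in Hl; [congruence|lia]|].
  set (b0 := s ++ p ++ (dl :: u0) ++ q). set (b1 := s ++ p' ++ u' ++ q').
  assert (Hb0 : sgood S A X s b0) by (apply sgood_blk; auto).
  assert (Hb1 : sgood S A X s b1) by (apply sgood_blk; auto).
  set (L := length b0).
  assert (HL1 : length b1 = L) by (unfold b1, L, b0; rewrite !length_app; simpl in *; lia).
  assert (HL : (0 < L)%nat) by (unfold L, b0; rewrite !length_app; simpl; lia).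
  assert (Hne' : b0 <> b1).
  { intros E. unfold b0, b1 in E. apply app_inv_head in E.
    apply app_len_inv in E as [_ E]; auto. apply app_len_inv in E as [E _]; auto. }
  set (Psi := fun pp : nat -> bool => cfg (BF A dl L (beta A L b0 b0 1 (fun k => if pp k then b1 else b0)))).
  assert (HPsi : forall pp, X (Psi pp)).
  { intros pp. apply (BF_mem S GI A X HXsub s Hs); auto.
    - intros k. destruct (pp k); auto. }
  assert (Hread : forall pp k, xw (Psi pp) (Z.of_nat ((k + 1) * L)) L = if pp k then b1 else b0).
  { intros pp k. unfold Psi. rewrite read_blk; auto.
    - replace (k + 1 - 1)%nat with k by lia; auto.
    - intros k'. destruct (pp k'); auto.
    - lia. }
  apply NNPP. intros Hc.
  destruct X_ne as [x0 Hx0].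
  destruct (Hpi_fib (pi x0)) as [f Hf].
  set (pp := fun k => if excluded_middle_informative (xw (f k) (Z.of_nat ((k + 1) * L)) L = b0) then true else false).
  destruct (Hf (Psi pp) (HPsi pp)) as [k Ek].
  { apply NNPP; intros Hn. apply Hc. exists (Psi pp), x0. auto. }
  specialize (Hread pp k). rewrite <- Ek in Hread.
  destruct (excluded_middle_informative (xw (f k) (Z.of_nat ((k + 1) * L)) L = b0)) as [E|E].
  - assert (pp k = true) as Hp by (unfold pp; destruct (excluded_middle_informative _); auto; contradiction).
    rewrite Hp in Hread. congruence.
  - assert (pp k = false) as Hp by (unfold pp; destruct (excluded_middle_informative _); auto; contradiction).
    rewrite Hp in Hread. congruence.
Qed.

Lemma nth_mid {B : Type} (a b u c : list B) r : (r < length u)%nat ->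
  nth_error (a ++ b ++ u ++ c) (length a + length b + r) = nth_error u r.
Proof.
  intros H. rewrite nth_error_app2 by lia. rewrite nth_error_app2 by lia.
  rewrite nth_error_app1 by lia. f_equal. lia.
Qed.

Lemma agree_mono m m' (x y : config S A) : (m' <= m)%nat -> agree m x y -> agree m' x y.
Proof. intros H Ha t Ht. apply Ha. apply (win_mono S GI) with m'; auto. Qed.

Lemma near_blocks : exists (dl : A) (a0 a1 : Y) (eps : R) (b0 b1 : list A) (L h : nat),
  0 < eps /\ 3 * eps <= dY a0 a1 /\ (0 < L)%nat /\ length b0 = L /\ length b1 = L /\
  sgood S A X s b0 /\ sgood S A X s b1 /\
  (forall y n, X y -> xw y (Z.of_nat n) L = b0 -> dY a0 (pi (Nat.iter (n + h) sshift y)) < eps) /\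
  (forall y n, X y -> xw y (Z.of_nat n) L = b1 -> dY a1 (pi (Nat.iter (n + h) sshift y)) < eps).
Proof.
  destruct pi_nonconst as [x1 [x2 [Hx1 [Hx2 Hne]]]].
  destruct HYm as [Hd0 [Hdeq [Hsym Htri]]].
  set (eps := dY (pi x1) (pi x2) / 3).
  assert (Heps : 0 < eps).
  { unfold eps. assert (dY (pi x1) (pi x2) <> 0) by (intro E; apply Hne; apply Hdeq; auto).
    specialize (Hd0 (pi x1) (pi x2)). lra. }
  destruct (Hpi_cont x1 eps Hx1 Heps) as [m1 Hm1].
  destruct (Hpi_cont x2 eps Hx2 Heps) as [m2 Hm2].
  set (m := (m1 + m2)%nat).
  assert (Hw := wst_le S GI m).
  set (c := Z.to_nat (- wst S GI m)).
  set (lenv := (m + c + 1)%nat).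
  assert (HR : inR (wst S GI m)).
  { destruct (wst_rng S GI m); [left; auto|right; auto]. }
  set (u1 := xw x1 (wst S GI m) lenv). set (u2 := xw x2 (wst S GI m) lenv).
  destruct (RET2 u1 u2) as [p [q [p' [q' [Lp [Lq [G1 G2]]]]]]]; try (apply (lang_xw S GI A X); auto).
  exists (x1 (oZ 0)), (pi x1), (pi x2), eps, (s ++ p ++ u1 ++ q), (s ++ p' ++ u2 ++ q'),
    (length (s ++ p ++ u1 ++ q)), (length s + length p + c)%nat.
  assert (Hu1 : length u1 = lenv) by (unfold u1, P1.xw; apply word_length).
  assert (Hu2 : length u2 = lenv) by (unfold u2, P1.xw; apply word_length).
  split; auto. split; [unfold eps; lra|]. split; [rewrite !length_app; lia|].
  split; auto. split; [rewrite !length_app; lia|].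
  split; [apply sgood_blk; auto|]. split; [apply sgood_blk; auto|].
  assert (Gen : forall (x : config S A) m0 (u p q : list A),
     (m0 <= m)%nat -> u = xw x (wst S GI m) lenv -> length p = length p ->
     (forall y, X y -> agree m0 x y -> dY (pi x) (pi y) < eps) ->
     forall y n, X y -> xw y (Z.of_nat n) (length (s ++ p ++ u ++ q)) = s ++ p ++ u ++ q ->
       dY (pi x) (pi (Nat.iter (n + (length s + length p + c)) sshift y)) < eps).
  { intros x m0 u pp qq Hm0 Eu _ Hc y n Hy E. apply Hc; [apply (X_iter S A X HXsub); auto|].
    apply agree_mono with m; auto. intros t Ht. apply (win_bd S GI) in Ht.
    rewrite (iter_shift GI).
    set (r := Z.to_nat (tZ t + Z.of_nat c)).
    assert (Hr : (r < length u)%nat) by (subst u; unfold P1.xw; rewrite word_length; unfold r, lenv, c; lia).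
    pose proof (nth_mid s pp u qq r Hr) as E1. rewrite <- E in E1.
    unfold P1.xw in E1. rewrite word_nth in E1 by (rewrite !length_app; lia).
    rewrite Eu in E1. unfold P1.xw in E1. rewrite word_nth in E1 by (unfold r, lenv, c; lia).
    inversion E1. replace (wst S GI m + Z.of_nat r)%Z with (tZ t) in H0 by (unfold r, c; lia).
    rewrite ofZ_toZ in H0. rewrite <- H0. f_equal. f_equal. unfold r, c; lia. }
  split.
  - intros y n Hy E. apply (Gen x1 m1 u1 p q); auto. unfold m; lia.
  - intros y n Hy E. replace (length p) with (length p') by auto.
    apply (Gen x2 m2 u2 p' q'); auto. unfold m; lia.
    transitivity (xw y (Z.of_nat n) (length (s ++ p ++ u1 ++ q))); [f_equal; rewrite !length_app; lia | exact E].
Qed.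

Section Constr.
Variables (l0 : list A) (Hl0 : forall a, In a l0) (dl : A) (a0 a1 : Y) (eps : R) (b0 b1 : list A) (L h : nat)
  (Heps : 0 < eps) (Hsep : 3 * eps <= dY a0 a1) (HL : (0 < L)%nat) (Hb0l : length b0 = L) (Hb1l : length b1 = L)
  (Hb0 : sgood S A X s b0) (Hb1 : sgood S A X s b1)
  (Hn0 : forall y n, X y -> xw y (Z.of_nat n) L = b0 -> dY a0 (pi (Nat.iter (n + h) sshift y)) < eps)
  (Hn1 : forall y n, X y -> xw y (Z.of_nat n) L = b1 -> dY a1 (pi (Nat.iter (n + h) sshift y)) < eps).

Fixpoint allw (n : nat) : list (list A) :=
  match n with 0 => [[]] | Datatypes.S n' => flat_map (fun a => map (cons a) (allw n')) l0 end.

Lemma allw_in w : In w (allw (length w)).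
Proof.
  induction w as [|a w IH]; simpl; auto. apply in_flat_map. exists a; split; auto.
  apply in_map; auto.
Qed.

Definition enum (k : nat) : list A := nth (snd (Cantor.of_nat k)) (allw (fst (Cantor.of_nat k))) [].

Lemma enum_surj w : exists k, enum k = w.
Proof.
  destruct (In_nth _ _ [] (allw_in w)) as [n [_ E]].
  exists (Cantor.to_nat (length w, n)). unfold enum. rewrite cancel_of_to. auto.
Qed.

Definition goodW (W : list A) : Prop := sgood S A X s W /\ exists a, length W = (a * L)%nat.

Definition Wi (i : nat) : list A :=
  if excluded_middle_informative (goodW (enum i)) then enum i else b0.
Definition ai (i : nat) : nat := length (Wi i) / L.

Lemma Wi_good i : sgood S A X s (Wi i) /\ length (Wi i) = (ai i * L)%nat.
Proof.
  assert (H : goodW (Wi i)).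
  { unfold Wi. destruct (excluded_middle_informative _); auto. split; auto. exists 1%nat; lia. }
  destruct H as [H1 [a Ha]]. split; auto. unfold ai. rewrite Ha, Nat.div_mul by lia. auto.
Qed.

Definition tau (i : nat) (p : nat -> bool) (k : nat) : list A := if cc i p k then b1 else b0.

Lemma tau_good i p k : sgood S A X s (tau i p k) /\ length (tau i p k) = L.
Proof. unfold tau; destruct (cc i p k); auto. Qed.

Definition Fp (i : nat) (p : nat -> bool) : Z -> A := BF A dl L (beta A L b0 (Wi i) (ai i) (tau i p)).
Definition zz (i : nat) (p : nat -> bool) (j : nat) : config S A := Nat.iter (j * L) sshift (cfg (Fp i p)).

Lemma Fp_mem i p : X (cfg (Fp i p)).
Proof.
  destruct (Wi_good i). apply (BF_mem S GI A X HXsub s Hs); auto. apply tau_good.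
Qed.

Lemma zz_mem i p j : X (zz i p j).
Proof. apply (X_iter S A X HXsub). apply Fp_mem. Qed.

Lemma zz_iter n i p j : Nat.iter n sshift (zz i p j) = cfg (fun q => Fp i p (q + Z.of_nat (n + j * L))%Z).
Proof. unfold zz. rewrite <- Nat.iter_add. apply iter_cfg. Qed.

Lemma xw_iter n (x : config S A) a len : (0 <= a)%Z -> xw (Nat.iter n sshift x) a len = xw x (a + Z.of_nat n) len.
Proof.
  intros Ha. unfold P1.xw. apply word_ext. intros k Hk. rewrite (iter_shift GI).
  rewrite (tZ_oZ GI) by (apply inR_nn; lia). f_equal. f_equal. lia.
Qed.

Lemma read_zz i p j k : (ai i <= k)%nat -> xw (zz i p j) (Z.of_nat (k * L)) L = tau i p (k + j - ai i)%nat.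
Proof.
  intros Hk. unfold zz. rewrite xw_iter by lia.
  replace (Z.of_nat (k * L) + Z.of_nat (j * L))%Z with (Z.of_nat ((k + j) * L)) by lia.
  unfold Fp. rewrite read_blk; auto; [intros; apply tau_good|lia].
Qed.

Lemma dist_far u v : dY a0 u < eps -> dY a1 v < eps -> eps < dY u v.
Proof.
  intros H1 H2. destruct HYm as [Hd0 [Hdeq [Hsym Htri]]].
  pose proof (Htri a0 u a1). pose proof (Htri u v a1). rewrite (Hsym v a1) in H0. lra.
Qed.

Lemma near_time i p j k : (ai i <= k)%nat ->
  (if cc i p (k + j - ai i) then dY a1 else dY a0) (Nat.iter (k * L + h) g (pi (zz i p j))) < eps.
Proof.
  intros Hk. rewrite <- pi_iter by apply zz_mem.
  pose proof (read_zz i p j k Hk) as E. unfold tau in E.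
  destruct (cc i p (k + j - ai i)).
  - apply Hn1; auto. apply zz_mem.
  - apply Hn0; auto. apply zz_mem.
Qed.

Lemma SEP_pair i p j i' p' j' : ~ (i = i' /\ j = j' /\ forall k, p k = p' k) ->
  forall N, exists n, (N <= n)%nat /\ eps < dY (Nat.iter n g (pi (zz i p j))) (Nat.iter n g (pi (zz i' p' j'))).
Proof.
  intros Hne N.
  assert (Hd : ((ai i' + j) <> (ai i + j'))%nat \/ i <> i' \/ exists k, p k <> p' k).
  { destruct (Nat.eq_dec i i') as [Ei|Ni]; [|right; left; auto].
    subst i'. destruct (Nat.eq_dec j j') as [Ej|Nj]; [|left; lia].
    subst j'. right; right. apply NNPP. intros Hn. apply Hne. repeat split; auto.
    intros k. apply NNPP. intros Hk. apply Hn. eauto. }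
  destruct (MM i p (ai i' + j) i' p' (ai i + j') Hd N) as [K [HK Hcc]].
  set (k := (K + ai i + ai i')%nat).
  exists (k * L + h)%nat. split; [unfold k; nia|].
  pose proof (near_time i p j k ltac:(unfold k; lia)) as N1.
  pose proof (near_time i' p' j' k ltac:(unfold k; lia)) as N2.
  replace (k + j - ai i)%nat with (K + (ai i' + j))%nat in N1 by (unfold k; lia).
  replace (k + j' - ai i')%nat with (K + (ai i + j'))%nat in N2 by (unfold k; lia).
  destruct (cc i p (K + (ai i' + j))), (cc i' p' (K + (ai i + j'))); try congruence.
  - destruct HYm as [_ [_ [Hsym _]]]. rewrite Hsym. apply dist_far; auto.
  - apply dist_far; auto.
Qed.

Definition Fstar (q : Z) : A := nth (Z.to_nat (q mod LZ L)) b0 dl.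

Lemma Fstar_eq : Fstar = BF A dl L (beta A L b0 b0 1 (fun _ => b0)).
Proof.
  apply functional_extensionality; intros q. unfold Fstar, BF. rewrite beta_const; auto.
Qed.

Lemma xstar_mem : X (cfg Fstar).
Proof. rewrite Fstar_eq. apply (BF_mem S GI A X HXsub s Hs); auto. lia. Qed.

Lemma Fstar_per q c : Fstar (q + Z.of_nat (c * L)) = Fstar q.
Proof.
  unfold Fstar. f_equal. f_equal. replace (Z.of_nat (c * L)) with (Z.of_nat c * LZ L)%Z by (unfold LZ; lia).
  apply Z_mod_plus_full.
Qed.

Lemma div_bd (r : Z) (m : nat) : (- Z.of_nat m <= r <= Z.of_nat m)%Z -> (- Z.of_nat m <= r / LZ L <= Z.of_nat m)%Z.
Proof.
  intros H. assert (HLZ : (1 <= LZ L)%Z) by (unfold LZ; lia).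
  pose proof (Z.div_mod r (LZ L) ltac:(lia)). pose proof (Z.mod_pos_bound r (LZ L) ltac:(lia)).
  set (qq := (r / LZ L)%Z) in *. set (rr := (r mod LZ L)%Z) in *. nia.
Qed.

Lemma near_star mstar i p j kk :
  (ai i + mstar <= kk + j)%nat ->
  (forall dd, (- Z.of_nat mstar <= dd <= Z.of_nat mstar)%Z ->
     cc i p (Z.to_nat (Z.of_nat (kk + j) + dd) - ai i) = false) ->
  agree mstar (cfg Fstar) (Nat.iter (kk * L) sshift (zz i p j)).
Proof.
  intros Hk Hc t Ht. apply (win_bd S GI) in Ht. pose proof (wst_le S GI mstar).
  rewrite zz_iter. unfold P1.cfg.
  set (r := tZ t) in *.
  assert (Hr : (- Z.of_nat mstar <= r <= Z.of_nat mstar)%Z) by lia.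
  set (Q := (r + Z.of_nat (kk * L + j * L))%Z).
  assert (EQ : Q = (Z.of_nat (kk + j) * LZ L + r)%Z) by (unfold Q, LZ; lia).
  assert (EB : (Q / LZ L = Z.of_nat (kk + j) + r / LZ L)%Z).
  { rewrite EQ. apply Z.div_add_l. unfold LZ; lia. }
  pose proof (div_bd r mstar Hr) as Hdb.
  unfold Fp, BF. fold Q. rewrite EB.
  unfold beta. destruct (Z.ltb_spec (Z.of_nat (kk + j) + r / LZ L) 0); [lia|].
  destruct (Nat.ltb_spec (Z.to_nat (Z.of_nat (kk + j) + r / LZ L)) (ai i)); [lia|].
  unfold tau. rewrite Hc by auto.
  fold (Fstar Q). unfold Q. replace (kk * L + j * L)%nat with ((kk + j) * L)%nat by lia.
  rewrite Fstar_per. auto.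
Qed.

Lemma SYN i p j i' p' j' eta : 0 < eta ->
  syndetic (fun n => dY (Nat.iter n g (pi (zz i p j))) (Nat.iter n g (pi (zz i' p' j'))) < eta).
Proof.
  intros Heta. destruct HYm as [Hd0 [Hdeq [Hsym Htri]]].
  destruct (Hpi_cont (cfg Fstar) (eta / 2) xstar_mem ltac:(lra)) as [ms Hms].
  destruct (SY (ai i' + j + (ai i + j')) ms) as [K0 [G HSY]].
  intros Q HQ. set (B := (ai i + ai i')%nat).
  destruct (HQ ((K0 + B + G + 2) * L)%nat) as [a Ha].
  set (K := (a / L + 1 + K0)%nat).
  destruct (HSY K ltac:(unfold K; lia)) as [K' [HK1 [HK2 Hz]]].
  set (n := ((K' + B) * L)%nat).
  pose proof (Nat.div_mod a L ltac:(lia)). pose proof (Nat.mod_upper_bound a L ltac:(lia)).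
  assert (Han : (a <= n)%nat) by (unfold n, K in *; nia).
  assert (Hna : (n < a + (K0 + B + G + 2) * L)%nat) by (unfold n, K in *; nia).
  exists n. split.
  { replace n with (a + (n - a))%nat by lia. apply Ha. lia. }
  assert (Gen : forall ii pp jj e, (e <= ai i' + j + (ai i + j'))%nat -> (K' + B + jj = ai ii + K' + e)%nat ->
     dY (pi (cfg Fstar)) (Nat.iter n g (pi (zz ii pp jj))) < eta / 2).
  { intros ii pp jj e He Hjj. rewrite <- pi_iter by apply zz_mem. apply Hms; [apply (X_iter S A X HXsub); apply zz_mem|].
    apply near_star; [lia|]. intros dd Hdd.
    replace (Z.to_nat (Z.of_nat (K' + B + jj) + dd) - ai ii)%nat with (Z.to_nat (Z.of_nat K' + dd) + e)%nat by lia.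
    apply Hz; auto. lia. }
  pose proof (Gen i p j (ai i' + j)%nat ltac:(lia) ltac:(unfold B; lia)).
  pose proof (Gen i' p' j' (ai i + j')%nat ltac:(lia) ltac:(unfold B; lia)).
  pose proof (Htri (Nat.iter n g (pi (zz i p j))) (pi (cfg Fstar)) (Nat.iter n g (pi (zz i' p' j')))).
  rewrite Hsym in H1 at 1. lra.
Qed.

Lemma Fp_local i p q M Q : (forall k, (k < M)%nat -> p k = q k) -> (Q < Z.of_nat M)%Z -> Fp i p Q = Fp i q Q.
Proof.
  intros H HQ. unfold Fp, BF. f_equal. unfold beta.
  destruct (Z.ltb_spec (Q / LZ L) 0); auto.
  destruct (Nat.ltb_spec (Z.to_nat (Q / LZ L)) (ai i)); auto.
  unfold tau. rewrite (cc_local i p q); auto.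
  intros k Hk. apply H.
  assert (HLZ : (1 <= LZ L)%Z) by (unfold LZ; lia).
  assert (Q / LZ L <= Q)%Z.
  { apply Z.div_le_upper_bound; [lia|]. assert (0 <= Q)%Z.
    { destruct (Z_lt_le_dec Q 0); auto. assert (Q / LZ L < 0)%Z by (apply Z.div_lt_upper_bound; lia). lia. }
    nia. }
  lia.
Qed.

Lemma zz_val i p j t : zz i p j t = Fp i p (tZ t + Z.of_nat (j * L))%Z.
Proof.
  change (zz i p j) with (Nat.iter 0 sshift (zz i p j)). rewrite zz_iter. reflexivity.
Qed.

Lemma cantor_C i j : cantor_set Y dY (fun y => exists p, pi (zz i p j) = y).
Proof.
  exists (fun p => pi (zz i p j)). split; [|split].
  - intros p e He. destruct (Hpi_cont (zz i p j) e (zz_mem i p j) He) as [m Hm].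
    exists (m + j * L + 1)%nat. intros q Hq. apply Hm; [apply zz_mem|].
    intros t Ht. apply (win_bd S GI) in Ht. rewrite !zz_val.
    apply Fp_local with (m + j * L + 1)%nat; auto. lia.
  - intros p q E. apply functional_extensionality. intros k. apply NNPP. intros Hk.
    destruct (SEP_pair i p j i q j ltac:(intros [_ [_ H]]; apply Hk; auto) 0) as [n [_ Hn]].
    rewrite E in Hn. destruct HYm as [_ [Hdeq _]]. rewrite (proj2 (Hdeq _ _) eq_refl) in Hn. lra.
  - intros y; split; auto.
Qed.

Definition TT (y : Y) : Prop := exists i p j, y = pi (zz i p j).

Lemma TT_myc : mycielski Y dY TT.
Proof.
  exists (fun n y => exists p, pi (zz (fst (Cantor.of_nat n)) p (snd (Cantor.of_nat n))) = y).
  split.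
  - intros n. apply cantor_C.
  - intros y; split.
    + intros [i [p [j E]]]. exists (Cantor.to_nat (i, j)). rewrite cancel_of_to. simpl. eauto.
    + intros [n [p E]]. exists (fst (Cantor.of_nat n)), p, (snd (Cantor.of_nat n)). auto.
Qed.

Lemma TT_inv y : TT y -> TT (Nat.iter L g y).
Proof.
  intros [i [p [j E]]]. subst y. exists i, p, (Datatypes.S j).
  rewrite <- pi_iter by apply zz_mem. unfold zz. rewrite <- Nat.iter_add. replace (L + j * L)%nat with (Datatypes.S j * L)%nat by lia. reflexivity.
Qed.

Lemma TT_scr : synd_scrambled Y dY g eps TT.
Proof.
  destruct HYm as [Hd0 [Hdeq [Hsym Htri]]].
  split.
  - exists (pi (zz 0 (fun _ => false) 0)), (pi (zz 0 (fun _ => true) 0)).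
    split; [exists 0%nat, (fun _ => false), 0%nat; auto|]. split; [exists 0%nat, (fun _ => true), 0%nat; auto|].
    intros E. destruct (SEP_pair 0 (fun _ => false) 0 0 (fun _ => true) 0 ltac:(intros [_ [_ H]]; discriminate (H 0%nat)) 0)
      as [n [_ Hn]]. rewrite E in Hn. rewrite (proj2 (Hdeq _ _) eq_refl) in Hn. lra.
  - intros x y [i [p [j Ex]]] [i' [p' [j' Ey]]] Hne.
    assert (Hpar : ~ (i = i' /\ j = j' /\ forall k, p k = p' k)).
    { intros [E1 [E2 E3]]. apply Hne. subst. f_equal. f_equal. apply functional_extensionality; auto. }
    subst x y. split; [|split].
    + intros eta Heta. apply SYN; auto.
    + intros Hcv. destruct (Hcv eps Heps) as [N HN].
      destruct (SEP_pair i p j i' p' j' Hpar N) as [n [Hq1 Hq2]].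
      specialize (HN n Hq1). unfold R_dist in HN. rewrite Rminus_0_r in HN.
      rewrite Rabs_right in HN by (apply Rle_ge; auto). lra.
    + intros delta Hdelta N. destruct (SEP_pair i p j i' p' j' Hpar N) as [n [Hq1 Hq2]].
      exists n; split; auto. lra.
Qed.

Lemma mul_ge (x : nat) : (x <= L * x)%nat.
Proof. nia. Qed.

Lemma TT_dense : dense Y dY TT.
Proof.
  intros y0 e He. destruct (Hpi_surj y0) as [x [Hx <-]].
  destruct (Hpi_cont x e Hx He) as [m Hm].
  pose proof (wst_le S GI m) as Hw.
  set (c := Z.to_nat (- wst S GI m)).
  set (v := xw x (wst S GI m) (m + c + 1)).
  assert (Hv : lang v).
  { apply (lang_xw S GI A X); auto. destruct (wst_rng S GI m); [left; auto|right; auto]. }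
  assert (Hvl : length v = (m + c + 1)%nat) by (unfold v, P1.xw; apply word_length).
  destruct (MIX S GI A X HXsub HXmix v s Hv lang_s) as [N2 HN2].
  pose proof (mul_ge (N2 + length v + 1)) as M2.
  destruct (HN2 (L * (N2 + length v + 1) + c - length v)%nat ltac:(lia)) as [q [Lq Gq]].
  destruct (MIX S GI A X HXsub HXmix s (v ++ q ++ s) lang_s Gq) as [N1 HN1].
  pose proof (mul_ge (N1 + length s + c + 1)) as M1.
  destruct (HN1 (L * (N1 + length s + c + 1) - length s - c)%nat ltac:(lia)) as [p [Lp Gp]].
  set (W := s ++ p ++ v ++ q).
  set (alpha := (N1 + length s + c + 1)%nat).
  assert (HaL : (alpha * L = length s + length p + c)%nat).
  { unfold alpha. rewrite Lp, Nat.mul_comm. lia. }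
  assert (HWl' : length W = (length s + length p + length v + length q)%nat) by (unfold W; rewrite !length_app; lia).
  assert (HWl : length W = ((alpha + N2 + length v + 1) * L)%nat).
  { rewrite HWl'. replace (alpha + N2 + length v + 1)%nat with (alpha + (N2 + length v + 1))%nat by lia.
    rewrite Nat.mul_add_distr_r, HaL, (Nat.mul_comm (N2 + length v + 1)). lia. }
  assert (HgW : goodW W) by (split; [apply sgood_blk; auto|exists (alpha + N2 + length v + 1)%nat; auto]).
  destruct (enum_surj W) as [i0 Ei0].
  assert (EW : Wi i0 = W) by (unfold Wi; rewrite Ei0; destruct (excluded_middle_informative _); auto; contradiction).
  assert (Ea : ai i0 = (alpha + N2 + length v + 1)%nat) by (unfold ai; rewrite EW, HWl, Nat.div_mul; lia).
  exists (pi (zz i0 (fun _ => false) alpha)). split; [exists i0, (fun _ => false), alpha; auto|].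
  apply Hm; [apply zz_mem|].
  intros t Ht. apply (win_bd S GI) in Ht. rewrite zz_val. unfold Fp.
  rewrite EW, Ea.
  assert (HQ : (0 <= tZ t + Z.of_nat (alpha * L) < Z.of_nat (length W))%Z) by (rewrite HaL, HWl'; unfold c in *; lia).
  rewrite BF_prefix; [| exact HL | exact HWl | exact HQ].
  set (r := Z.to_nat (tZ t + Z.of_nat c)).
  assert (Hr : (r < length v)%nat) by (unfold r, c; lia).
  replace (Z.to_nat (tZ t + Z.of_nat (alpha * L))) with (length s + length p + r)%nat by (rewrite HaL; unfold r, c; lia).
  pose proof (nth_mid s p v q r Hr) as E1. fold W in E1.
  rewrite (nth_error_nth' W dl) in E1 by (rewrite HWl'; lia).
  unfold v, P1.xw in E1. rewrite word_nth in E1 by (unfold r, c; lia). inversion E1.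
  rewrite H0. replace (wst S GI m + Z.of_nat r)%Z with (tZ t) by (unfold r, c; lia).
  rewrite ofZ_toZ. auto.
Qed.

Lemma constr_final : exists (eps' : R) (k : nat) (T : Y -> Prop),
    0 < eps' /\ (1 <= k)%nat /\
    dense Y dY T /\ mycielski Y dY T /\
    (forall y, T y -> T (Nat.iter k g y)) /\
    synd_scrambled Y dY g eps' T.
Proof.
  exists eps, L, TT. split; auto. split; [lia|]. split; [apply TT_dense|].
  split; [apply TT_myc|]. split; [apply TT_inv|apply TT_scr].
Qed.

End Constr.

Lemma main_result (HA : exists l : list A, forall a, In a l) : exists (eps' : R) (k : nat) (T : Y -> Prop),
    0 < eps' /\ (1 <= k)%nat /\
    dense Y dY T /\ mycielski Y dY T /\
    (forall y, T y -> T (Nat.iter k g y)) /\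
    synd_scrambled Y dY g eps' T.
Proof.
  destruct HA as [l0 Hl0].
  destruct near_blocks as [dl [a0 [a1 [eps [b0 [b1 [L [h [Heps [Hsep [HL [Hb0l [Hb1l [Hb0 [Hb1 [Hn0 Hn1]]]]]]]]]]]]]]]].
  eapply (constr_final l0 Hl0 dl a0 a1 eps b0 b1 L h); eauto.
Qed.

End Main.

End P5.
Import P5.

(* b = false : one-sided subshift (configurations nat -> A);
   b = true  : two-sided subshift (configurations Z -> A). *)
Theorem theorem4p11
  (b : bool) (A : Type) (HA : exists l : list A, forall a, In a l)
  (X : config (sys_of b) A -> Prop)
  (HXinf : infinite_set (sys_of b) A X)
  (HXmix : mixing (sys_of b) A X)
  (HXsync : synchronizing_subshift (sys_of b) A X)
  (Y : Type) (d : Y -> Y -> R) (HY : compact_metric_space Y d)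
  (g : Y -> Y) (Hg : continuous_map Y d g)
  (pi : config (sys_of b) A -> Y)
  (Hpi_cont : forall x eps, X x -> 0 < eps -> exists m, forall y, X y ->
                 agree m x y -> d (pi x) (pi y) < eps)
  (Hpi_surj : forall y, exists x, X x /\ pi x = y)
  (Hpi_eqv : forall x, X x -> pi (sshift x) = g (pi x))
  (Hpi_fib : forall y, exists f : nat -> config (sys_of b) A,
                forall x, X x -> pi x = y -> exists n, f n = x) :
  exists (eps : R) (k : nat) (T : Y -> Prop),
    0 < eps /\ (1 <= k)%nat /\
    dense Y d T /\ mycielski Y d T /\
    (forall y, T y -> T (Nat.iter k g y)) /\
    synd_scrambled Y d g eps T.
Proof.
  destruct HXsync as [HXsub [_ [s Hs]]].
  exact (main_result (sys_of b) (GI_sys b) A X HXinf HXmix HXsub s Hs Y d (proj1 HY) g pi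
           Hpi_cont Hpi_surj Hpi_eqv Hpi_fib HA).
Qed.
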